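(* Let $C=(1,c_2,c_3,c_4,c_5,c_6)=(1,c_2,2c_2-1,c_4,c_2+c_4-1,2c_4-1)$ be a system that is canonical and whose subsystem $(1,c_2,c_3,c_4,c_5)$ is noncanonical, and let $\ell=\lceil c_5/c_3\rceil$. Then $c_4\ge 3c_2-1$, $\mathrm{grd}_C(\ell c_3)\le\ell$, and $\mathrm{grd}_C(\ell c_3)=\ell c_3-c_5+1-\lfloor(\ell c_3-c_5)/c_2\rfloor(c_2-1)$.
   Context: A system is a tuple $C=(c_1,\dots,c_n)$ of integers with $1=c_1<c_2<\dots<c_n$; for $k\le n$, $(c_1,\dots,c_k)$ is a subsystem. For a positive integer $v$, $\mathrm{opt}_C(v)$ is the minimum of $\sum_i x_i$ over $x\in\mathbb{Z}_{\ge0}^n$ with $\sum_i c_ix_i=v$. The greedy representation of $v$ is produced by: for $i=n$ down to $1$, while $c_i\le$ remaining value, take a coin $c_i$. $\mathrm{grd}_C(v)$ is its number of coins. A positive integer $w$ is a counterexample if $\mathrm{opt}_C(w)<\mathrm{grd}_C(w)$; $C$ is canonical if it has none, noncanonical otherwise. *)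

(* Defs.v *)
From mathcomp Require Import all_boot.
From mathcomp Require Import all_algebra.
Set Implicit Arguments.
Unset Strict Implicit.
Unset Printing Implicit Defensive.

Definition is_system (C : seq nat) : bool :=
  (head 0 C == 1) && sorted ltn C.

Definition subsystem (C : seq nat) (k : nat) : seq nat := take k C.

Fixpoint greedy_desc (D : seq nat) (v : nat) : nat :=
  match D with
  | [::] => 0
  | c :: D' => v %/ c + greedy_desc D' (v %% c)
  end.

Definition grd (C : seq nat) (v : nat) : nat := greedy_desc (rev C) v.

Definition is_rep (C : seq nat) (x : seq nat) (v : nat) : Prop :=
  size x = size C /\ \sum_(i < size C) nth 0 C i * nth 0 x i = v.

Definition counterexample (C : seq nat) (w : nat) : Prop :=
  0 < w /\ exists x, is_rep C x w /\ sumn x < grd C w.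

Definition canonical (C : seq nat) : Prop := forall w, ~ counterexample C w.
Definition noncanonical (C : seq nat) : Prop := exists w, counterexample C w.

(* Main.v *)
Require Import Defs.
From mathcomp Require Import all_boot all_algebra zify.
Import GRing.Theory.

Lemma gstep0 c D v : v < c -> greedy_desc (c :: D) v = greedy_desc D v.
Proof. by move=> h /=; rewrite divn_small // modn_small. Qed.

Lemma gstepR c D v : 0 < c -> c <= v ->
  greedy_desc (c :: D) v = (greedy_desc (c :: D) (v - c)).+1.
Proof.
move=> c0 cv /=; have -> : v = c + (v - c) by rewrite subnKC.
by rewrite addKn divnDl ?dvdnn // divnn c0 modnDl add1n.
Qed.

Lemma g1 v : greedy_desc [:: 1] v = v.
Proof. by rewrite /= divn1 addn0. Qed.

Lemma greedy0 D : greedy_desc D 0 = 0.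
Proof. by elim: D => //= c D; rewrite div0n mod0n => ->. Qed.

Lemma canle C w x : canonical C -> 0 < w -> is_rep C x w -> grd C w <= sumn x.
Proof.
move=> Hc w0 Hr; rewrite leqNgt; apply/negP => Hlt.
by apply: (Hc w); split => //; exists x.
Qed.

Arguments canle {C w x}.

Lemma Q (d : nat) : 0 < d ->
  canonical [:: 1; d+1; 2*d+1; 3*d+1; 4*d+1; 6*d+1] ->
  forall w n K, w = n + K * d -> K <= 4 * n ->
  greedy_desc [:: 4*d+1; 3*d+1; 2*d+1; d+1; 1] w <= n.
Proof.
move=> d0 Hc; elim/ltn_ind => w IHw n; elim/ltn_ind: n => n IHn K Hw HK.
case: (ltnP w (4*d+1)) => hw.
  case: (posnP w) => [->|wpos]; first by rewrite greedy0.
  have K3 : K <= 3.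
    rewrite leqNgt; apply/negP => h4.
    have : 4 * d <= K * d by rewrite leq_mul2r h4 orbT.
    lia.
  have grdE : grd [:: 1; d+1; 2*d+1; 3*d+1; 4*d+1; 6*d+1] w =
     greedy_desc [:: 4*d+1; 3*d+1; 2*d+1; d+1; 1] w.
    have -> : grd [:: 1; d+1; 2*d+1; 3*d+1; 4*d+1; 6*d+1] w =
      greedy_desc [:: 6*d+1; 4*d+1; 3*d+1; 2*d+1; d+1; 1] w by [].
    rewrite gstep0 //; lia.
  rewrite -grdE.
  have n1 : 0 < n.
    case: (posnP n) => // n0; have K0 : K = 0 by lia.
    by move: Hw; rewrite n0 K0 mul0n => Hw; lia.
  move: K3 Hw HK; case: K => [|[|[|[|K]]]] // _ Hw _.
  - have R : is_rep [:: 1; d+1; 2*d+1; 3*d+1; 4*d+1; 6*d+1] [:: n; 0; 0; 0; 0; 0] w.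
      rewrite /is_rep /=; split => //; rewrite !big_ord_recl big_ord0 /=; lia.
    have := canle Hc wpos R; rewrite /=; lia.
  - have R : is_rep [:: 1; d+1; 2*d+1; 3*d+1; 4*d+1; 6*d+1] [:: n-1; 1; 0; 0; 0; 0] w.
      rewrite /is_rep /=; split => //; rewrite !big_ord_recl big_ord0 /=; lia.
    have := canle Hc wpos R; rewrite /=; lia.
  - have R : is_rep [:: 1; d+1; 2*d+1; 3*d+1; 4*d+1; 6*d+1] [:: n-1; 0; 1; 0; 0; 0] w.
      rewrite /is_rep /=; split => //; rewrite !big_ord_recl big_ord0 /=; lia.
    have := canle Hc wpos R; rewrite /=; lia.
  - have R : is_rep [:: 1; d+1; 2*d+1; 3*d+1; 4*d+1; 6*d+1] [:: n-1; 0; 0; 1; 0; 0] w.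
      rewrite /is_rep /=; split => //; rewrite !big_ord_recl big_ord0 /=; lia.
    have := canle Hc wpos R; rewrite /=; lia.
case: (leqP 4 K) => hK.
  have hKd : 4 * d <= K * d by rewrite leq_mul2r hK orbT.
  have e : (K - 4) * d = K * d - 4 * d by rewrite mulnBl.
  rewrite gstepR //; last lia.
  have := IHw (w - (4*d+1)) _ (n-1) (K-4) _ _.
  move=> /(_ _ _ _) H; have : greedy_desc [:: 4 * d + 1; 3 * d + 1; 2 * d + 1; d + 1; 1] (w - (4 * d + 1)) <= n - 1.
    apply: H; lia.
  lia.
have hKd : K * d <= 3 * d by rewrite leq_mul2r -ltnS hK orbT.
have e : (K + 1) * d = K * d + d by rewrite mulnDl mul1n.
apply: (@leq_trans (n - d)); last lia.
apply: (IHn (n - d) _ (K + 1)); lia.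
Qed.

Theorem lemma9 (c2 c4 : nat) :
  let C := [:: 1; c2; 2 * c2 - 1; c4; c2 + c4 - 1; 2 * c4 - 1] in
  let c3 := 2 * c2 - 1 in
  let c5 := c2 + c4 - 1 in
  let l := (c5 + c3 - 1) %/ c3 in
  is_system C ->
  canonical C ->
  noncanonical (subsystem C 5) ->
  [/\ 3 * c2 - 1 <= c4,
      grd C (l * c3) <= l &
      (Posz (grd C (l * c3))
        = Posz (l * c3 - c5 + 1) - Posz ((l * c3 - c5) %/ c2 * (c2 - 1)))%R].
Proof.
cbv zeta => Hsys Hcan Hnc.
move: Hsys; rewrite /is_system /= => /and5P[h1 h2 h3 h4 h5].
have H1 : 3 * c2 - 1 <= c4.
  rewrite leqNgt; apply/negP => hlt.
  case: (eqVneq c4 (3 * c2 - 2)) => [e4|n4].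
    set d := c2 - 1.
    have d0 : 0 < d by rewrite /d; lia.
    have E : [:: 1; c2; 2 * c2 - 1; c4; c2 + c4 - 1; 2 * c4 - 1] =
             [:: 1; d+1; 2*d+1; 3*d+1; 4*d+1; 6*d+1].
      rewrite /d; congr [:: _; _; _; _; _; _]; lia.
    rewrite E in Hcan Hnc.
    case: Hnc => w [w0 [x [[Hs Hr] Hlt]]].
    move: Hs Hr Hlt; case: x => [|x0 [|x1 [|x2 [|x3 [|x4 [|]]]]]] //= _.
    rewrite !big_ord_recl big_ord0 /= => Hr Hlt.
    have HQ : greedy_desc [:: 4*d+1; 3*d+1; 2*d+1; d+1; 1] w <= x0 + (x1 + (x2 + (x3 + (x4 + 0)))).
      have HQ := (Q _ d0 Hcan w (x0 + (x1 + (x2 + (x3 + (x4 + 0))))) (x1 + 2 * x2 + 3 * x3 + 4 * x4)).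
      apply: HQ; last lia.
      rewrite -Hr; lia.
    move: Hlt.
    have -> : grd [:: 1; d+1; 2*d+1; 3*d+1; 4*d+1] w =
      greedy_desc [:: 4*d+1; 3*d+1; 2*d+1; d+1; 1] w by [].
    lia.
  have GE : forall v, grd [:: 1; c2; 2 * c2 - 1; c4; c2 + c4 - 1; 2 * c4 - 1] v
     = greedy_desc [:: 2 * c4 - 1; c2 + c4 - 1; c4; 2 * c2 - 1; c2; 1] v by [].
  case: (eqVneq c4 (2 * c2)) => [e4|n4'].
    have R : is_rep [:: 1; c2; 2 * c2 - 1; c4; c2 + c4 - 1; 2 * c4 - 1]
                [:: 0; 0; 2; 0; 0; 0] (2 * (2 * c2 - 1)).
      rewrite /is_rep /=; split => //; rewrite !big_ord_recl big_ord0 /=; lia.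
    have := canle Hcan _ R; rewrite GE.
    rewrite gstep0; last lia.
    rewrite gstepR; [|lia|lia].
    rewrite gstep0; last lia.
    rewrite gstep0; last lia.
    rewrite gstep0; last lia.
    rewrite gstep0; last lia.
    rewrite g1 => H.
    have /H : 0 < 2 * (2 * c2 - 1) by lia.
    rewrite /=; lia.
  have R : is_rep [:: 1; c2; 2 * c2 - 1; c4; c2 + c4 - 1; 2 * c4 - 1]
              [:: 0; 1; 1; 0; 0; 0] (3 * c2 - 1).
    rewrite /is_rep /=; split => //; rewrite !big_ord_recl big_ord0 /=; lia.
  have := canle Hcan _ R; rewrite GE.
  rewrite gstep0; last lia.
  rewrite gstep0; last lia.
  rewrite gstepR; [|lia|lia].
  rewrite gstep0; last lia.
  rewrite gstep0; last lia.
  rewrite gstep0; last lia.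
  rewrite g1 => H.
  have /H : 0 < 3 * c2 - 1 by lia.
  rewrite /=; lia.
have [c3 ec3] : {c3 | c3 = 2 * c2 - 1} by eexists.
rewrite -ec3 in h2 h3 Hcan *.
have c3p : 0 < c3 by lia.
have hq := divn_eq (c2 + c4 - 1 + c3 - 1) c3.
have hr := ltn_pmod (c2 + c4 - 1 + c3 - 1) c3p.
set q := (c2 + c4 - 1 + c3 - 1) %/ c3 in hq *.
set r := (c2 + c4 - 1 + c3 - 1) %% c3 in hq hr.
have GE : forall v, grd [:: 1; c2; c3; c4; c2 + c4 - 1; 2 * c4 - 1] v
   = greedy_desc [:: 2 * c4 - 1; c2 + c4 - 1; c4; c3; c2; 1] v by [].
have Hg : grd [:: 1; c2; c3; c4; c2 + c4 - 1; 2 * c4 - 1] (q * c3) =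
   (greedy_desc [:: c2; 1] (q * c3 - (c2 + c4 - 1))).+1.
  rewrite GE.
  rewrite gstep0; last lia.
  rewrite gstepR; [|lia|lia].
  rewrite gstep0; last lia.
  rewrite gstep0; last lia.
  rewrite gstep0; last lia.
  done.
split => //.
  have R : is_rep [:: 1; c2; c3; c4; c2 + c4 - 1; 2 * c4 - 1]
              [:: 0; 0; q; 0; 0; 0] (q * c3).
    rewrite /is_rep /=; split => //; rewrite !big_ord_recl big_ord0 /=; lia.
  have /(canle Hcan) : 0 < q * c3 by lia.
  by move/(_ _ R); rewrite /=; lia.
rewrite Hg /= divn1.
set s := q * c3 - (c2 + c4 - 1).
have hs := divn_eq s c2.
set qq := s %/ c2 in hs *.
set m := s %% c2 in hs *.
rewrite mulnBr muln1.
have : qq <= qq * c2 by rewrite leq_pmulr; lia.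
clearbody m qq s q r.
lia.
Qed.
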